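(* Let ${\cal G}$ be a colored graph and $L$ a line of color $i$ joining vertices $v$ and $w$, such that the bubbles of colors $\widehat i$ containing $v$ and $w$, call them $B_a$ and $B_b$, are distinct. Let ${\cal G}-L$ be the graph obtained by contracting $L$. Then (i) for each color $k\neq i$, the bubble of colors $\widehat k$ of ${\cal G}$ containing $v$ (which also contains $w$) becomes a bubble of ${\cal G}-L$ with two fewer vertices, three fewer lines, one fewer face and the same genus; all other bubbles of colors $\widehat k$, $k\neq i$, are unchanged; (ii) $B_a$ and $B_b$ are replaced by a single bubble of colors $\widehat i$ with $|n_a|+|n_b|-2$ vertices, $|l_a|+|l_b|-3$ lines, $|f_a|+|f_b|-3$ faces, and genus $g_a+g_b$. In particular, if $B_a$ is planar the merged bubble has genus $g_b$.
   Context: Colored graph: a finite connected bipartite multigraph (vertices ''black'' or ''white'', no loops) whose edges (''lines'') carry a color in $\{0,1,2,3\}$ such that every vertex is incident to exactly one line of each color. For colors $i\neq j$, a face of colors $ij$ is a connected component of the subgraph formed by the lines of colors $i,j$. For a color $i$, $\widehat{i}=\{0,1,2,3\}\setminus\{i\}$; a bubble of colors $\widehat i$ is a connected component of the subgraph formed by all lines of colors in $\widehat i$; for a bubble $b$, $n_b,l_b$ are its vertices and lines, $f_b$ the faces of ${\cal G}$ with both colors in $\widehat i$ contained in $b$, and its genus is defined by $|n_b|-|l_b|+|f_b|=2-2g_b$; planar means $g_b=0$. Contraction of a line $L$ of color $i$ with endpoints $v,w$ (lying in distinct bubbles of colors $\widehat i$): for each color $j\neq i$ let $a_j$ (resp.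 $b_j$) be the other endpoint of the line of color $j$ at $v$ (resp. at $w$). Delete $v$, $w$ and all lines incident to them, and for each $j\neq i$ add a line of color $j$ between $a_j$ and $b_j$. The result ${\cal G}-L$ is again a colored graph. *)

(* Defs.v *)
From HB Require Import structures.
From mathcomp Require Import all_boot all_order all_algebra.
Set Implicit Arguments. Unset Strict Implicit. Unset Printing Implicit Defensive.

(* A colored graph is encoded on a finite ambient type V by its vertex set
   D : {set V} and, for each color c : 'I_4, the map p c : V -> V sending a
   vertex x to the other endpoint of the (unique) line of color c at x. *)

Section ColoredGraphs.
Variable V : finType.
Implicit Types (D : {set V}) (p : 'I_4 -> V -> V) (S : {set 'I_4}) (b : {set V}).

Definition adj p S : rel V := fun x y => [exists c in S, p c x == y].

Definition component p S (x : V) : {set V} := [set y | connect (adj p S) x y].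

Definition colored_graph D p : Prop :=
  [/\ forall c x, x \in D -> p c x \in D,
      forall c x, x \in D -> p c (p c x) = x,
      exists black : V -> bool, forall c x, x \in D -> black (p c x) = ~~ black x,
      D != set0
    & forall x y, x \in D -> y \in D -> connect (adj p setT) x y].

Definition hat (i : 'I_4) : {set 'I_4} := [set~ i].

Definition lines p S b : {set 'I_4 * {set V}} :=
  [set (c, [set x; p c x]) | c in S, x in b].

Definition pairsets S : {set {set 'I_4}} :=
  [set P : {set 'I_4} | (P \subset S) && (#|P| == 2)].

Definition faces p S b : {set {set 'I_4} * {set V}} :=
  [set (P, component p P x) | P in pairsets S, x in b].

Definition genus p S b : rat :=
  ((2 - (#|b|%:R - #|lines p S b|%:R + #|faces p S b|%:R)) / 2)%R.

Definition contr_set D (v w : V) : {set V} := D :\ v :\ w.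
Definition contr_map p (i : 'I_4) (v w : V) : 'I_4 -> V -> V :=
  fun c x => if c == i then p c x
             else if p c x == v then p c w
             else if p c x == w then p c v
             else p c x.
End ColoredGraphs.

(* Main.v *)
Require Import Defs.
From HB Require Import structures.
From mathcomp Require Import all_boot all_order all_algebra.
Set Implicit Arguments. Unset Strict Implicit. Unset Printing Implicit Defensive.

Lemma connect_inv (T : finType) (e : rel T) (P : T -> Prop) x :
  P x -> (forall u u', P u -> e u u' -> P u') -> forall y, connect e x y -> P y.
Proof.
move=> Px step y /connectP [s pth ->].
elim: s x Px pth => [|a s IH] x Px //= /andP [e1 pth].
exact: IH (step _ _ Px e1) pth.
Qed.

Lemma adjP (T : finType) (p : 'I_4 -> T -> T) (S : {set 'I_4}) x y :
  reflect (exists2 c, c \in S & p c x = y) (adj p S x y).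
Proof.
apply: (iffP existsP) => [[c /andP [cS /eqP e]]|[c cS e]]; exists c => //.
by rewrite cS e eqxx.
Qed.

Lemma adj1 (T : finType) (p : 'I_4 -> T -> T) (S : {set 'I_4}) c x :
  c \in S -> adj p S x (p c x).
Proof. by move=> cS; apply/adjP; exists c. Qed.

Lemma conn1 (T : finType) (p : 'I_4 -> T -> T) (S : {set 'I_4}) c x :
  c \in S -> connect (adj p S) x (p c x).
Proof. by move=> cS; apply: connect1; apply: adj1. Qed.

Section Generic.
Variables (V : finType) (D : {set V}) (p : 'I_4 -> V -> V) (black : V -> bool).
Implicit Types (S : {set 'I_4}) (b : {set V}).
Hypothesis HD : forall c x, x \in D -> p c x \in D.
Hypothesis Hinv : forall c x, x \in D -> p c (p c x) = x.
Hypothesis Hbl : forall c x, x \in D -> black (p c x) = ~~ black x.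

Lemma conn_D S x y : x \in D -> connect (adj p S) x y -> y \in D.
Proof.
move=> xD; apply: (connect_inv (P := fun y => y \in D)) => // u u' uD /adjP [c _ <-]; exact: HD.
Qed.

Lemma conn_sym S x y : x \in D -> connect (adj p S) x y -> connect (adj p S) y x.
Proof.
move=> xD H.
suff: y \in D /\ connect (adj p S) y x by case.
move: y H; apply: (connect_inv (P := fun y => y \in D /\ connect (adj p S) y x)) => [|u u' [uD cux] /adjP [c cS <-]].
  by split.
split; first exact: HD.
apply: connect_trans cux; rewrite -{2}(Hinv c uD); exact: conn1.
Qed.

Lemma comp_eq S x y : x \in D -> y \in component p S x ->
  component p S y = component p S x.
Proof.
move=> xD; rewrite inE => cxy; have yD := conn_D xD cxy.
apply/setP => z; rewrite !inE; apply/idP/idP => H.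
  exact: connect_trans H.
by apply: connect_trans H; apply: conn_sym.
Qed.

Lemma comp_closed S x y c : y \in component p S x -> c \in S ->
  p c y \in component p S x.
Proof. by rewrite !inE => H cS; apply: connect_trans H (conn1 _ _ cS). Qed.

Lemma comp_D S x y : x \in D -> y \in component p S x -> y \in D.
Proof. by rewrite inE; apply: conn_D. Qed.

Lemma p_neq c x : x \in D -> p c x != x.
Proof.
move=> xD; apply/eqP => e; have := Hbl c xD; rewrite e.
by case: (black x).
Qed.

Lemma lines_card S b : b \subset D ->
  (forall c x, c \in S -> x \in b -> p c x \in b) ->
  #|lines p S b| = (#|S| * #|[set x in b | black x]|)%N.
Proof.
move=> /subsetP bD bcl.
pose F := fun cx : 'I_4 * V => (cx.1, [set cx.2; p cx.1 cx.2]).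
have -> : lines p S b = F @: setX S [set x in b | black x].
  apply/setP => y; apply/idP/idP.
    case/imset2P => c x cS xb ->.
    case bx: (black x).
      by apply/imsetP; exists (c, x) => //; rewrite !inE cS xb bx.
    apply/imsetP; exists (c, p c x).
      by rewrite !inE cS bcl //= Hbl ?bx ?bD.
    by rewrite /F /= Hinv ?bD // setUC.
  case/imsetP => [[c x]]; rewrite !inE /= => /andP [cS /andP [xb bx]] ->.
  by apply/imset2P; exists c x.
rewrite card_in_imset ?cardsX //.
move=> [c x] [c' y]; rewrite !inE /= => /andP [cS /andP [xb bx]] /andP [c'S /andP [yb]] by_ [e1 e2].
subst c'; congr pair.
have : y \in [set x; p c x] by rewrite e2 !inE eqxx.
rewrite !inE => /orP [/eqP -> //|/eqP yp].
by move: by_; rewrite yp Hbl ?bD // bx.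
Qed.

End Generic.

Lemma faces_card (V : finType) (p : 'I_4 -> V -> V) (S : {set 'I_4}) (b : {set V}) :
  #|faces p S b| = (\sum_(P in pairsets S) #|[set component p P x | x in b]|)%N.
Proof.
rewrite -sum1_card (partition_big fst (mem (pairsets S))) /=; last first.
  by move=> [P X] /imset2P [P' x P'S _ [-> _]].
apply: eq_bigr => P PS; rewrite sum1_card.
have pinj : injective (pair P : {set V} -> {set 'I_4} * {set V}) by move=> X Y [].
rewrite -(card_imset _ pinj); apply: eq_card => y.
rewrite unfold_in; apply/andP/imsetP.
  case=> /imset2P [P' x P'S xb ->] /= /eqP ->.
  by exists (component p P x) => //; apply/imsetP; exists x.
case=> X /imsetP [x xb ->] ->; split => //=.
by apply/imset2P; exists P x.
Qed.


Lemma gshift (a l f a' l' f' k : nat) : (a + f = a' + f' + k)%N -> (l = l' + k)%N ->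
  ((2 - (a%:R - l%:R + f%:R)) / 2 : rat)%R = ((2 - (a'%:R - l'%:R + f'%:R)) / 2)%R.
Proof.
have h (x y z : rat) : (x + z - (y + z) = x - y)%R.
  by rewrite GRing.opprD GRing.addrACA GRing.subrr GRing.addr0.
have E (a0 l0 f0 : nat) : (a0%:R - l0%:R + f0%:R : rat)%R = ((a0 + f0)%:R - l0%:R)%R.
  by rewrite GRing.addrAC -GRing.natrD.
by rewrite !E => -> ->; rewrite !GRing.natrD h.
Qed.

Lemma pairsets_card (S : {set 'I_4}) : #|S| = 3 -> #|pairsets S| = 3.
Proof.
move=> hS.
have -> : pairsets S = [set S :\ c | c in S].
  apply/setP => P; rewrite inE; apply/andP/imsetP.
    case=> PS /eqP hP.
    have : #|S :\: P| == 1 by rewrite cardsDS // hS hP.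
    case/cards1P => c hc.
    have cS : c \in S.
      have : c \in S :\: P by rewrite hc set11.
      by rewrite inE => /andP [].
    exists c => //; apply/setP => y; rewrite in_setD1.
    case yP: (y \in P).
      rewrite (subsetP PS _ yP) andbT; apply/esym/eqP => e.
      by move: (set11 c); rewrite -hc inE -e yP.
    case: eqVneq => [-> //|yc] /=; apply/esym/negbTE; apply: contra yc => yS.
    have : y \in S :\: P by rewrite inE yP yS.
    by rewrite hc inE.
  case=> c cS ->; split; first exact: subD1set.
  by have := cardsD1 c S; rewrite cS hS add1n => -[<-].
rewrite card_in_imset ?hS // => c1 c2 c1S c2S e.
have : c1 \notin S :\ c2 by rewrite -e !inE eqxx.
by rewrite !inE c1S andbT negbK => /eqP.
Qed.


Lemma gsum (t ea eb em : rat) : (ea + eb = em + t -> (t - em) / 2 = (t - ea) / 2 + (t - eb) / 2)%R.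
Proof.
move=> h; rewrite -GRing.mulrDl; congr (_ / _)%R.
have -> : em = (ea + eb - t)%R by rewrite h GRing.addrK.
by rewrite GRing.opprB GRing.addrA [RHS]GRing.addrACA GRing.opprD.
Qed.

Lemma gsum_nat (a la fa b lb fb m lm fm : nat) : (m + 2 = a + b)%N -> (lm + 3 = la + lb)%N -> (fm + 3 = fa + fb)%N ->
  ((2 - (m%:R - lm%:R + fm%:R)) / 2 : rat)%R = ((2 - (a%:R - la%:R + fa%:R)) / 2 + (2 - (b%:R - lb%:R + fb%:R)) / 2)%R.
Proof.
have E (a0 l0 f0 : nat) : (a0%:R - l0%:R + f0%:R : rat)%R = ((a0 + f0)%:R - l0%:R)%R.
  by rewrite GRing.addrAC -GRing.natrD.
move=> h1 h2 h3; apply: gsum; rewrite !E GRing.addrACA -GRing.opprD -!GRing.natrD.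
have -> : (a + fa + (b + fb) = (m + fm + 2) + 3)%N.
  by rewrite addnACA -h1 -h3 addnACA !addnA.
rewrite -h2.
have h (x y z : rat) : (x + z - (y + z) = x - y)%R.
  by rewrite GRing.opprD GRing.addrACA GRing.subrr GRing.addr0.
by rewrite !GRing.natrD h GRing.addrAC.
Qed.

Section Contr.
Variables (V : finType) (D : {set V}) (p : 'I_4 -> V -> V) (black : V -> bool).
Variables (i : 'I_4) (v w : V).
Implicit Types (S P : {set 'I_4}) (b : {set V}).
Hypothesis HD : forall c x, x \in D -> p c x \in D.
Hypothesis Hinv : forall c x, x \in D -> p c (p c x) = x.
Hypothesis Hbl : forall c x, x \in D -> black (p c x) = ~~ black x.
Hypothesis Hv : v \in D.
Hypothesis HL : p i v = w.
Hypothesis Hnw : ~~ connect (adj p (hat i)) v w.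

Local Notation D' := (contr_set D v w).
Local Notation p' := (contr_map p i v w).

Lemma wD : w \in D. Proof. by rewrite -HL HD. Qed.
Lemma HLw : p i w = v. Proof. by rewrite -HL Hinv. Qed.
Lemma vw : v != w. Proof. by rewrite -HL eq_sym (p_neq Hbl). Qed.
Lemma wv : w != v. Proof. by rewrite eq_sym vw. Qed.
Lemma bw : black w = ~~ black v. Proof. by rewrite -HL Hbl. Qed.

Lemma in_hat c : (c \in hat i) = (c != i).
Proof. by rewrite !inE. Qed.

Lemma pvw c : c != i -> p c v != w.
Proof.
move=> ci; apply/eqP => e; move/negP: Hnw; apply.
by rewrite -e; apply: conn1; rewrite in_hat.
Qed.

Lemma pwv c : c != i -> p c w != v.
Proof. by move=> ci; apply/eqP => e; move/eqP: (pvw ci); rewrite -e Hinv // wD. Qed.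

Lemma inD' x : (x \in D') = [&& x != v, x != w & x \in D].
Proof. by rewrite /contr_set !inE; case: (x != v); case: (x != w). Qed.

Lemma p'E c x : c != i -> p c x != v -> p c x != w -> p' c x = p c x.
Proof. by rewrite /contr_map => /negbTE -> /negbTE -> /negbTE ->. Qed.

Lemma p'i x : p' i x = p i x.
Proof. by rewrite /contr_map eqxx. Qed.

Lemma p'v c : c != i -> p' c (p c v) = p c w.
Proof. by rewrite /contr_map => /negbTE ->; rewrite Hinv // eqxx. Qed.

Lemma p'w c : c != i -> p' c (p c w) = p c v.
Proof.
by rewrite /contr_map => /negbTE ->; rewrite Hinv ?wD // eq_sym (negbTE vw) eqxx.
Qed.

Lemma pv_D' c : c != i -> p c v \in D'.
Proof. by move=> ci; rewrite inD' (p_neq Hbl) // pvw // HD. Qed.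

Lemma pw_D' c : c != i -> p c w \in D'.
Proof. by move=> ci; rewrite inD' pwv // (p_neq Hbl) ?wD // HD ?wD. Qed.

Lemma HD' c x : x \in D' -> p' c x \in D'.
Proof.
rewrite inD' => /and3P [xv xw xD].
case: (eqVneq c i) => [->|ci].
  rewrite p'i inD' HD // andbT; apply/andP; split; apply/eqP => e.
    by move/eqP: xw; rewrite -HL -e Hinv.
  by move/eqP: xv; rewrite -HLw -e Hinv.
case: (eqVneq (p c x) v) => [e|pv].
  by rewrite /contr_map (negbTE ci) e eqxx pw_D'.
case: (eqVneq (p c x) w) => [e|pw].
  by rewrite /contr_map (negbTE ci) e eqxx (negbTE wv) pv_D'.
by rewrite p'E // inD' pv pw HD.
Qed.

Lemma Hinv' c x : x \in D' -> p' c (p' c x) = x.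
Proof.
rewrite inD' => /and3P [xv xw xD].
case: (eqVneq c i) => [->|ci]; first by rewrite !p'i Hinv.
case: (eqVneq (p c x) v) => [e|pv].
  have -> : p' c x = p c w by rewrite /contr_map (negbTE ci) e eqxx.
  by rewrite p'w // -e Hinv.
case: (eqVneq (p c x) w) => [e|pw].
  have -> : p' c x = p c v by rewrite /contr_map (negbTE ci) e eqxx (negbTE wv).
  by rewrite p'v // -e Hinv.
by rewrite !p'E // Hinv.
Qed.

Lemma Hbl' c x : x \in D' -> black (p' c x) = ~~ black x.
Proof.
rewrite inD' => /and3P [xv xw xD].
case: (eqVneq c i) => [->|ci]; first by rewrite !p'i Hbl.
case: (eqVneq (p c x) v) => [e|pv].
  have -> : p' c x = p c w by rewrite /contr_map (negbTE ci) e eqxx.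
  by rewrite (Hbl c wD) bw -(Hbl c xD) e negbK.
case: (eqVneq (p c x) w) => [e|pw].
  have -> : p' c x = p c v by rewrite /contr_map (negbTE ci) e eqxx (negbTE wv).
  have bvx : black v = black x by rewrite -[black v]negbK -bw -e Hbl // negbK.
  by rewrite (Hbl c Hv) bvx.
by rewrite !p'E // Hbl.
Qed.

Lemma not_w x : connect (adj p (hat i)) v x -> x != w.
Proof. by move=> H; apply/eqP => e; move/negP: Hnw; rewrite -e. Qed.

Lemma Fconn S c d : c \in S -> d \in S -> c != i -> d != i ->
  connect (adj p' S) (p c v) (p d v).
Proof.
move=> cS dS ci di.
case: (eqVneq c d) => [<-|cd]; first exact: connect0.
pose g x := if x \in D then p c (p d x) else x.
have ginj : injective g.
  move=> x y; rewrite /g; case xD: (x \in D); case yD: (y \in D) => e.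
  - by rewrite -(Hinv d xD) -(Hinv d yD) -(Hinv c (HD d xD)) e Hinv // HD.
  - by move: (HD c (HD d xD)); rewrite e yD.
  - by move: (HD c (HD d yD)); rewrite -e xD.
  - by [].
pose x0 := p c v.
have hx0 : fconnect g x0 (p d v).
  rewrite fconnect_sym //; have -> : x0 = g (p d v) by rewrite /g HD // Hinv.
  exact: fconnect1.
have [n /eqP Hn Hmin] := find_ex_minn (ex_intro (fun n => iter n g x0 == p d v) _ (introT eqP (iter_findex hx0))).
suff: forall m, m <= n -> [/\ iter m g x0 \in D, black (iter m g x0) = ~~ black v,
   connect (adj p (hat i)) v (iter m g x0) & connect (adj p' S) x0 (iter m g x0)].
  by case/(_ n (leqnn n)) => _ _ _; rewrite Hn.
elim=> [_|m IH Hm].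
  by split; rewrite /= ?HD ?Hbl ?connect0 //; apply: conn1; rewrite in_hat.
have [yD yb cy c'y] := IH (ltnW Hm).
set y := iter m g x0 in yD yb cy c'y *.
have -> : iter m.+1 g x0 = p c (p d y) by rewrite iterS /g yD.
have yv : y != v by apply/eqP => e; move: yb; rewrite e; case: (black v).
have zv : p d y != v.
  apply/eqP => e; have := Hmin m; rewrite /= -e Hinv // eqxx => /(_ isT).
  by rewrite leqNgt Hm.
have cz : connect (adj p (hat i)) v (p d y).
  by apply: connect_trans cy (conn1 _ _ _); rewrite in_hat.
have cy' : connect (adj p (hat i)) v (p c (p d y)).
  by apply: connect_trans cz (conn1 _ _ _); rewrite in_hat.
have y'v : p c (p d y) != v.
  by apply/eqP => e; move: yb; rewrite -e !Hbl ?HD //; case: (black y).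
split.
- by rewrite !HD.
- by rewrite !Hbl ?HD // yb negbK.
- exact: cy'.
apply: connect_trans c'y _; apply: (@connect_trans _ _ (p' d y)).
  exact: conn1.
rewrite p'E ?(not_w cz) //.
have := @conn1 _ p' S c (p d y) cS; rewrite p'E ?(not_w cy') //.
Qed.

Lemma K2 S c d (a b : V) : c \in S -> d \in S -> c != i -> d != i ->
  a \in [set v; w] -> b \in [set v; w] ->
  connect (adj p' S) (p c a) (p d b).
Proof.
move=> cS dS ci di; rewrite !inE => ha hb.
apply: (@connect_trans _ _ (p c v)).
  case/orP: ha => /eqP ->; first exact: connect0.
  by have := @conn1 _ p' S c (p c w) cS; rewrite p'w.
apply: connect_trans (Fconn cS dS ci di) _.
case/orP: hb => /eqP ->; first exact: connect0.
by have := @conn1 _ p' S d (p d v) dS; rewrite p'v.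
Qed.


Definition gL c0 u := if u == v then p c0 v else if u == w then p c0 w else u.
Lemma gLv c0 : gL c0 v = p c0 v. Proof. by rewrite /gL eqxx. Qed.
Lemma gLw c0 : gL c0 w = p c0 w. Proof. by rewrite /gL (negbTE wv) eqxx. Qed.
Lemma gLo c0 u : u != v -> u != w -> gL c0 u = u.
Proof. by rewrite /gL => /negbTE -> /negbTE ->. Qed.

Lemma inv2 : v \in [set v; w]. Proof. by rewrite !inE eqxx. Qed.
Lemma inw2 : w \in [set v; w]. Proof. by rewrite !inE eqxx orbT. Qed.

Lemma Lstep S c0 c u : c0 \in S -> c0 != i -> c \in S -> u \in D ->
  connect (adj p' S) (gL c0 u) (gL c0 (p c u)).
Proof.
move=> c0S c0i cS uD.
case: (eqVneq u v) => [->|uv].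
  rewrite gLv; case: (eqVneq c i) => [->|ci].
    by rewrite HL gLw; apply: K2 => //; [exact: inv2|exact: inw2].
  rewrite gLo ?(p_neq Hbl) ?pvw //; apply: K2 => //; exact: inv2.
case: (eqVneq u w) => [->|uw].
  rewrite gLw; case: (eqVneq c i) => [->|ci].
    by rewrite HLw gLv; apply: K2 => //; [exact: inw2|exact: inv2].
  rewrite gLo ?(p_neq Hbl) ?pwv ?wD //; apply: K2 => //; exact: inw2.
rewrite (gLo _ uv uw).
case: (eqVneq (p c u) v) => [e|pv].
  have ci : c != i by apply: contraNneq uw => ci; rewrite -HL -e ci Hinv.
  have -> : u = p c v by rewrite -e Hinv.
  rewrite Hinv // gLv; apply: K2 => //; exact: inv2.
case: (eqVneq (p c u) w) => [e|pw].
  have ci : c != i by apply: contraNneq uv => ci; rewrite -HLw -e ci Hinv.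
  have -> : u = p c w by rewrite -e Hinv.
  rewrite Hinv ?wD // gLw; apply: K2 => //; exact: inw2.
rewrite gLo //.
have <- : p' c u = p c u.
  by case: (eqVneq c i) => [->|ci]; [rewrite p'i|rewrite p'E].
exact: conn1.
Qed.

Lemma Lift S c0 (a b : V) : c0 \in S -> c0 != i -> a \in D -> connect (adj p S) a b ->
  connect (adj p' S) (gL c0 a) (gL c0 b).
Proof.
move=> c0S c0i aD H.
suff: b \in D /\ connect (adj p' S) (gL c0 a) (gL c0 b) by case.
move: b H; apply: (connect_inv (P := fun u => u \in D /\ connect (adj p' S) (gL c0 a) (gL c0 u))).
  by split.
move=> u _ [uD cu] /adjP [c cS <-]; split; first exact: HD.
by apply: connect_trans cu _; apply: Lstep.
Qed.

Definition Cvw S z := connect (adj p S) v z || connect (adj p S) w z.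

Lemma Drop S x y : x \in D' -> connect (adj p' S) x y ->
  y \in D' /\ (connect (adj p S) x y \/ (Cvw S x /\ Cvw S y)).
Proof.
move=> xD' H.
move: y H; apply: (connect_inv (P := fun u => u \in D' /\ (connect (adj p S) x u \/ (Cvw S x /\ Cvw S u)))).
  by split => //; left.
move=> u _ [uD' hu] /adjP [c cS <-]; split; first exact: HD'.
have uD : u \in D by move: uD'; rewrite inD' => /and3P [].
have xD : x \in D by move: xD'; rewrite inD' => /and3P [].
have edge : connect (adj p S) u (p c u) by exact: conn1.
case: (eqVneq c i) => [ci|ci].
  rewrite ci p'i -ci; case: hu => [cxu|[hx hu]]; first by left; apply: connect_trans cxu edge.
  by right; split => //; case/orP: hu => hu; rewrite /Cvw (connect_trans hu edge) ?orbT.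
case: (eqVneq (p c u) v) => [e|pv].
  have -> : p' c u = p c w by rewrite /contr_map (negbTE ci) e eqxx.
  have cw : connect (adj p S) w (p c w) by exact: conn1.
  right; split; last by rewrite /Cvw cw orbT.
  case: hu => [cxu|[]//].
  have cuv : connect (adj p S) v u by rewrite -(Hinv c uD) e; exact: conn1.
  by rewrite /Cvw (connect_trans cuv (conn_sym HD Hinv xD cxu)).
case: (eqVneq (p c u) w) => [e|pw].
  have -> : p' c u = p c v by rewrite /contr_map (negbTE ci) e eqxx (negbTE wv).
  have cv : connect (adj p S) v (p c v) by exact: conn1.
  right; split; last by rewrite /Cvw cv.
  case: hu => [cxu|[]//].
  have cuw : connect (adj p S) w u by rewrite -(Hinv c uD) e; exact: conn1.
  by rewrite /Cvw (connect_trans cuw (conn_sym HD Hinv xD cxu)) orbT.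
rewrite p'E //; case: hu => [cxu|[hx hu]]; first by left; apply: connect_trans cxu edge.
by right; split => //; case/orP: hu => hu; rewrite /Cvw (connect_trans hu edge) ?orbT.
Qed.

Lemma Cvw_ex S z : Cvw S z -> exists2 a, a \in [set v; w] & connect (adj p S) a z.
Proof. by case/orP => h; [exists v => //; exact: inv2|exists w => //; exact: inw2]. Qed.

Lemma gLa c0 a : a \in [set v; w] -> gL c0 a = p c0 a.
Proof. by rewrite !inE => /orP [] /eqP ->; [rewrite gLv|rewrite gLw]. Qed.

Lemma pa_D' c a : c != i -> a \in [set v; w] -> p c a \in D'.
Proof. by move=> ci /set2P [] ->; [apply: pv_D'|apply: pw_D']. Qed.

Lemma aD a : a \in [set v; w] -> a \in D.
Proof. by move=> /set2P [] ->; [exact: Hv|exact: wD]. Qed.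

Lemma D'D x : x \in D' -> x \in D.
Proof. by rewrite inD' => /and3P []. Qed.

Lemma GL1 S c0 x : i \in S -> c0 \in S -> c0 != i -> x \in D' ->
  component p' S x = component p S x :\ v :\ w.
Proof.
move=> iS c0S c0i xD'; have xD := D'D xD'.
apply/setP => y; rewrite !inE; apply/idP/idP.
  move=> H; have [yD' hy] := Drop xD' H.
  move: yD'; rewrite inD' => /and3P [yv yw yD]; rewrite yv yw /=.
  case: hy => // [[hx hy]].
  have toV z : Cvw S z -> connect (adj p S) v z.
    case/orP => // h; apply: connect_trans h.
    by rewrite -HL; exact: conn1.
  exact: connect_trans (conn_sym HD Hinv Hv (toV _ hx)) (toV _ hy).
case/and3P => yw yv cxy; have yD := conn_D HD xD cxy.
move: xD'; rewrite inD' => /and3P [xv xw _].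
by have := Lift c0S c0i xD cxy; rewrite !gLo.
Qed.

Lemma GL2a S c0 x : i \notin S -> c0 \in S -> x \in D' -> ~~ Cvw S x ->
  component p' S x = component p S x.
Proof.
move=> iS c0S xD' nC; have xD := D'D xD'.
have c0i : c0 != i by apply: contraNneq iS => <-.
apply/setP => y; rewrite !inE; apply/idP/idP.
  move=> H; have [yD' [] //] := Drop xD' H.
  by case=> hx; rewrite hx in nC.
move=> cxy; have yD := conn_D HD xD cxy.
have yv : y != v.
  apply: contraNneq nC => e; rewrite e in cxy.
  by rewrite /Cvw (conn_sym HD Hinv xD cxy).
have yw : y != w.
  apply: contraNneq nC => e; rewrite e in cxy.
  by rewrite /Cvw (conn_sym HD Hinv xD cxy) orbT.
move: xD'; rewrite inD' => /and3P [xv xw _].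
by have := Lift c0S c0i xD cxy; rewrite !gLo.
Qed.

Lemma GL2b S c0 x : i \notin S -> c0 \in S -> x \in D' -> Cvw S x ->
  component p' S x = (component p S v :|: component p S w) :\ v :\ w.
Proof.
move=> iS c0S xD' hC; have xD := D'D xD'.
have c0i : c0 != i by apply: contraNneq iS => <-.
apply/setP => y; rewrite !inE; apply/idP/idP.
  move=> H; have [yD' hy] := Drop xD' H.
  move: yD'; rewrite inD' => /and3P [yv yw yD]; rewrite yv yw /=.
  case: hy => [cxy|[_ //]].
  by case/orP: hC => h; rewrite (connect_trans h cxy) ?orbT.
case/and3P => yw yv hy.
have [a ha cax] := Cvw_ex hC.
have [b hb cby] := Cvw_ex hy.
have c1 := Lift c0S c0i (aD ha) cax.
have c2 := Lift c0S c0i (aD hb) cby.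
move: xD'; rewrite inD' => /and3P [xv xw _].
rewrite gLa // gLo // in c1; rewrite gLa // gLo // in c2.
apply: connect_trans (conn_sym HD' Hinv' (pa_D' c0i ha) c1) _.
by apply: connect_trans c2; apply: K2.
Qed.

Lemma card2_minus (A : {set V}) : v \in A -> w \in A -> #|A :\ v :\ w| + 2 = #|A|.
Proof.
move=> vA wA; rewrite (cardsD1 v A) (cardsD1 w (A :\ v)) vA !inE wv wA.
by rewrite addnC.
Qed.

Lemma blk_minus (A : {set V}) : v \in A -> w \in A ->
  #|[set y in A :\ v :\ w | black y]| + 1 = #|[set y in A | black y]|.
Proof.
move=> vA wA; set X := [set y in A | black y].
have -> : [set y in A :\ v :\ w | black y] = X :\ v :\ w.
  by apply/setP => y; rewrite !inE; case: (y != w); case: (y != v).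
rewrite (cardsD1 v X) (cardsD1 w (X :\ v)) !inE wv vA wA bw.
by case: (black v); rewrite /= ?add0n addnC.
Qed.

Lemma conn_sub S P x y : P \subset S -> connect (adj p P) x y -> connect (adj p S) x y.
Proof.
move=> /subsetP PS; apply: connect_sub => a b /adjP [c cP <-].
by apply: conn1; apply: PS.
Qed.

Lemma exists_other P : #|P| = 2 -> exists2 c0, c0 \in P & c0 != i.
Proof.
move=> hP; have : P :\ i != set0.
  rewrite -card_gt0; have := cardsD1 i P; rewrite hP.
  by case: (i \in P) => /=; case: #|P :\ i|.
case/set0Pn => c0; rewrite !inE => /andP [c0i c0P]; by exists c0.
Qed.

Lemma FAcount P b : i \in P -> #|P| = 2 -> v \in b -> b \subset D ->
  (forall y z, y \in b -> connect (adj p P) y z -> z \in b) ->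
  #|[set component p' P x | x in b :\ v :\ w]| = #|[set component p P x | x in b]|.
Proof.
move=> iP hP vb /subsetP bD bcl.
have [c0 c0P c0i] := exists_other hP.
have cvw : connect (adj p P) v w by rewrite -HL; exact: conn1.
have wb : w \in b := bcl _ _ vb cvw.
have b'D' x : x \in b :\ v :\ w -> x \in D'.
  by rewrite inD' !inE => /and3P [xw xv /bD xD]; rewrite xv xw xD.
rewrite (eq_in_imset (g := fun x => component p P x :\ v :\ w)); last first.
  by move=> x /b'D' xD'; rewrite (GL1 iP c0P c0i xD').
rewrite (imset_comp (fun X => X :\ v :\ w) (component p P)).
rewrite card_in_imset; last first.
  move=> X1 X2 /imsetP [x1 x1b ->] /imsetP [x2 x2b ->] e.
  have x1D' := b'D' _ x1b; move: (x1D'); rewrite inD' => /and3P [x1v x1w x1D].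
  have : x1 \in component p P x1 :\ v :\ w by rewrite !inE x1v x1w connect0.
  rewrite e !inE => /and3P [_ _ h].
  have x2D : x2 \in D by apply: bD; move: x2b; rewrite !inE => /and3P [].
  by apply: (comp_eq HD Hinv x2D); rewrite inE.
have c0v : p c0 v \in b :\ v :\ w.
  by rewrite !inE (p_neq Hbl) ?pvw // (bcl _ _ vb (conn1 p v c0P)).
have ecv : component p P (p c0 v) = component p P v.
  by apply: (comp_eq HD Hinv Hv); rewrite inE; exact: conn1.
have ecw : component p P w = component p P v.
  by apply: (comp_eq HD Hinv Hv); rewrite inE.
apply: eq_card => X; apply/imsetP/imsetP => [[x xb ->]|[x xb ->]].
  by exists x => //; move: xb; rewrite !inE => /and3P [].
case: (eqVneq x v) => [->|xv]; first by exists (p c0 v).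
case: (eqVneq x w) => [->|xw]; first by exists (p c0 v) => //; rewrite ecw.
by exists x => //; rewrite !inE xv xw.
Qed.

Lemma FBcount P b : i \notin P -> P != set0 -> v \in b -> w \in b -> b \subset D ->
  (forall y z, y \in b -> connect (adj p P) y z -> z \in b) ->
  #|[set component p' P x | x in b :\ v :\ w]| + 1 = #|[set component p P x | x in b]|.
Proof.
move=> iP /set0Pn [c0 c0P] vb wb /subsetP bD bcl.
have c0i : c0 != i by apply: contraNneq iP => <-.
have nvw : ~~ connect (adj p P) v w.
  apply: contra Hnw; apply: conn_sub; apply/subsetP => c cP.
  by rewrite in_hat; apply: contraNneq iP => <-.
set L := [set component p P x | x in b].
set Cv := component p P v; set Cw := component p P w.
set N := (Cv :|: Cw) :\ v :\ w.
have b'D' x : x \in b :\ v :\ w -> x \in D'.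
  by rewrite inD' !inE => /and3P [xw xv /bD xD]; rewrite xv xw xD.
have c0v : p c0 v \in b :\ v :\ w.
  by rewrite !inE (p_neq Hbl) ?pvw // (bcl _ _ vb (conn1 p v c0P)).
have cc0 : connect (adj p P) v (p c0 v) := conn1 p v c0P.
have ecv : component p P (p c0 v) = Cv.
  by apply: (comp_eq HD Hinv Hv); rewrite inE.
have CvCw : Cv != Cw.
  apply/eqP => e; move/negP: nvw; apply.
  have : w \in Cw by rewrite inE connect0.
  by rewrite -e inE.
have -> : [set component p' P x | x in b :\ v :\ w] = N |: (L :\ Cv :\ Cw).
  apply/setP => X; rewrite in_setU1; apply/imsetP/idP.
    case=> x xb ->; have xD' := b'D' _ xb.
    case hx: (Cvw P x).
      by rewrite (GL2b iP c0P xD' hx) eqxx.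
    rewrite (GL2a iP c0P xD' (negbT hx)); apply/orP; right.
    have xD := D'D xD'.
    rewrite !inE; apply/and3P; split.
    - apply: contraFneq hx => e.
      have : x \in Cw by rewrite -e inE connect0.
      by rewrite inE /Cvw => ->; rewrite orbT.
    - apply: contraFneq hx => e.
      have : x \in Cv by rewrite -e inE connect0.
      by rewrite inE /Cvw => ->.
    - by apply/imsetP; exists x => //; move: xb; rewrite !inE => /and3P [].
  case/orP => [/eqP ->|].
    exists (p c0 v) => //; rewrite (GL2b iP c0P (b'D' _ c0v)) //.
    by rewrite /Cvw cc0.
  rewrite !inE => /and3P [XCw XCv /imsetP [x xb eX]].
  have xD := bD _ xb.
  have nC : ~~ Cvw P x.
    apply/orP => [[h|h]].
      by move/eqP: XCv; apply; rewrite eX; apply: (comp_eq HD Hinv Hv); rewrite inE.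
    by move/eqP: XCw; apply; rewrite eX; apply: (comp_eq HD Hinv wD); rewrite inE.
  have xv : x != v by apply: contraNneq nC => ->; rewrite /Cvw connect0.
  have xw : x != w by apply: contraNneq nC => ->; rewrite /Cvw connect0 orbT.
  have xb' : x \in b :\ v :\ w by rewrite !inE xv xw xb.
  by exists x => //; rewrite eX (GL2a iP c0P (b'D' _ xb') nC).
have NL : N \notin L :\ Cv :\ Cw.
  rewrite !inE; apply/negP => /and3P [NCw NCv /imsetP [x xb eN]].
  have : p c0 v \in N by move: c0v; rewrite !inE cc0 => /and3P [-> -> _].
  rewrite eN => h; move/eqP: NCv; apply; rewrite eN.
  by rewrite -(comp_eq HD Hinv (bD _ xb) h) ecv.
rewrite cardsU1 NL (cardsD1 Cv L) (cardsD1 Cw (L :\ Cv)).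
have -> : Cv \in L by apply/imsetP; exists v.
have -> : Cw \in L :\ Cv by rewrite !inE eq_sym CvCw; apply/imsetP; exists w.
by rewrite /= addnC.
Qed.


Lemma hat_card k : #|hat k| = 3.
Proof. by rewrite cardsC1 card_ord. Qed.

Lemma comp_sub S P x y z : P \subset S -> y \in component p S x ->
  connect (adj p P) y z -> z \in component p S x.
Proof. by rewrite !inE => PS cxy cyz; apply: connect_trans cxy (conn_sub PS cyz). Qed.

Lemma comp_subD S x : x \in D -> component p S x \subset D.
Proof. by move=> xD; apply/subsetP => y; exact: (comp_D HD xD). Qed.

Lemma comp_subD' S x : x \in D' -> component p' S x \subset D'.
Proof. by move=> xD; apply/subsetP => y; exact: (comp_D HD' xD). Qed.

Lemma notin_comp S u x y : x \in D -> x \notin component p S u ->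
  y \in component p S x -> y \notin component p S u.
Proof.
move=> xD xB; rewrite !inE => cxy; apply/negP => cvy; move/negP: xB; apply.
rewrite inE; exact: connect_trans cvy (conn_sym HD Hinv xD cxy).
Qed.

Lemma PartI k : k != i ->
     let B := component p (hat k) v in
     let B' := B :\ v :\ w in
     [/\ w \in B /\ (exists2 x, x \in D' & component p' (hat k) x = B'),
         (#|B'| + 2 = #|B|)%N,
         (#|lines p' (hat k) B'| + 3 = #|lines p (hat k) B|)%N,
         (#|faces p' (hat k) B'| + 1 = #|faces p (hat k) B|)%N /\
         genus p' (hat k) B' = genus p (hat k) B
       & forall x, x \in D -> x \notin B ->
           [/\ x \in D', component p' (hat k) x = component p (hat k) x
             & forall c y, c \in hat k -> y \in component p (hat k) x -> p' c y = p c y]].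
Proof.
move=> ki B B'; set S := hat k.
have iS : i \in S by rewrite !inE eq_sym.
set P0 := S :\ i.
have hP0 : #|P0| = 2.
  by have := cardsD1 i S; rewrite hat_card iS => -[].
have [c0 c0P0 c0i] := exists_other hP0.
have c0S : c0 \in S by move: c0P0; rewrite !inE => /andP [].
have vB : v \in B by rewrite inE connect0.
have wB : w \in B by rewrite inE -HL; apply: conn1.
have BD : B \subset D by apply: comp_subD.
have c0v' := pv_D' c0i.
have eB' : component p' S (p c0 v) = B'.
  rewrite (GL1 iS c0S c0i c0v') (comp_eq HD Hinv Hv) //.
  by rewrite inE; apply: conn1.
have Hc : (#|B'| + 2 = #|B|)%N by apply: card2_minus.
have Hl : (#|lines p' S B'| + 3 = #|lines p S B|)%N.
  rewrite -eB' (lines_card Hinv' Hbl' (comp_subD' _ c0v')); last first.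
    by move=> c y cS yB; apply: comp_closed.
  rewrite (lines_card Hinv Hbl BD); last by move=> c y cS yB; apply: comp_closed.
  by rewrite eB' hat_card -(blk_minus vB wB) mulnDr muln1.
have bcl P y z : P \subset S -> y \in B -> connect (adj p P) y z -> z \in B.
  by move=> PS; apply: comp_sub.
have Hf : (#|faces p' S B'| + 1 = #|faces p S B|)%N.
  rewrite !faces_card.
  have P0in : P0 \in pairsets S by rewrite inE subD1set hP0 eqxx.
  rewrite (bigD1 P0 P0in) [in RHS](bigD1 P0 P0in) /= addnAC.
  rewrite (FBcount (P := P0) (b := B)) ?vB ?wB //; last 3 first.
  - by rewrite !inE eqxx.
  - by rewrite -card_gt0 hP0.
  - by move=> y z; apply: bcl; apply: subD1set.
  congr (_ + _); apply: eq_bigr => P /andP [].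
  move=> PS0 PP0; have : P \in pairsets S by []. rewrite inE => /andP [PS /eqP hP].
  have iP : i \in P.
    apply: contraNT PP0 => iP; rewrite eqEcard hP hP0 leqnn andbT.
    by apply/subsetP => c cP; rewrite in_setD1 (subsetP PS _ cP) andbT; apply: contraNneq iP => <-.
  apply: FAcount => //; by move=> y z; apply: bcl.
split => //.
- split => //; exists (p c0 v) => //.
- split => //; rewrite /genus.
  symmetry; apply: (@gshift _ _ _ _ _ _ 3%N).
    by rewrite -Hc -Hf addnACA.
  by rewrite -Hl.
move=> x xD xB.
have xv : x != v by apply: contraNneq xB => ->.
have xw : x != w by apply: contraNneq xB => ->.
have xD' : x \in D' by rewrite inD' xv xw xD.
have nB y : y \in component p S x -> (y != v) && (y != w).
  move=> hy; have := notin_comp xD xB hy.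
  by apply: contraR; case/nandP => /negPn /eqP ->.
split => //.
  rewrite (GL1 iS c0S c0i xD'); apply/setP => y; rewrite !inE.
  case hy: (connect _ x y); rewrite ?andbF //.
  have hy' : y \in component p S x by rewrite inE.
  by case/andP: (nB y hy') => -> ->.
move=> c y cS hy.
case: (eqVneq c i) => [->|ci]; first by rewrite p'i.
by case/andP: (nB _ (comp_closed hy cS)) => h1 h2; rewrite p'E.
Qed.

Lemma PartII :
  (let Ba := component p (hat i) v in
   let Bb := component p (hat i) w in
   let M := (Ba :|: Bb) :\ v :\ w in
   [/\ (exists2 x, x \in D' & component p' (hat i) x = M),
       (#|M| + 2 = #|Ba| + #|Bb|)%N /\
       (#|lines p' (hat i) M| + 3 = #|lines p (hat i) Ba| + #|lines p (hat i) Bb|)%N,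
       (#|faces p' (hat i) M| + 3 = #|faces p (hat i) Ba| + #|faces p (hat i) Bb|)%N,
       (genus p' (hat i) M = genus p (hat i) Ba + genus p (hat i) Bb)%R /\
       (genus p (hat i) Ba = 0%R -> genus p' (hat i) M = genus p (hat i) Bb)
     & forall x, x \in D -> x \notin Ba -> x \notin Bb ->
         [/\ x \in D', component p' (hat i) x = component p (hat i) x
           & forall c y, c \in hat i -> y \in component p (hat i) x -> p' c y = p c y]]).
Proof.
move=> Ba Bb M; set S := hat i.
have iS : i \notin S by rewrite !inE eqxx.
have : S != set0 by rewrite -card_gt0 hat_card.
case/set0Pn => c0 c0S.
have c0i : c0 != i by apply: contraNneq iS => <-.
have vBa : v \in Ba by rewrite inE connect0.
have wBb : w \in Bb by rewrite inE connect0.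
have BaD : Ba \subset D by apply: comp_subD.
have BbD : Bb \subset D by apply: comp_subD; exact: wD.
have disj : Ba :&: Bb = set0.
  apply/setP => y; rewrite inE [RHS]inE; apply/negP => /andP [yA yB].
  have e1 := comp_eq HD Hinv Hv yA.
  have e2 := comp_eq HD Hinv wD yB.
  have : w \in component p (hat i) v by rewrite -e1 e2 inE connect0.
  by rewrite inE; apply/negP.
set U := Ba :|: Bb.
have vU : v \in U by rewrite inE vBa.
have wU : w \in U by rewrite inE wBb orbT.
have UD : U \subset D by rewrite subUset BaD BbD.
have c0v' := pv_D' c0i.
have eM : component p' S (p c0 v) = M.
  by rewrite (GL2b iS c0S c0v') // /Cvw conn1.
have Hc : (#|M| + 2 = #|Ba| + #|Bb|)%N.
  by rewrite card2_minus // -cardsUI disj cards0 addn0.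
have Hl : (#|lines p' S M| + 3 = #|lines p S Ba| + #|lines p S Bb|)%N.
  rewrite -eM (lines_card Hinv' Hbl' (comp_subD' _ c0v')); last first.
    by move=> c y cS yB; apply: comp_closed.
  rewrite (lines_card Hinv Hbl BaD); last by move=> c y cS yB; apply: comp_closed.
  rewrite (lines_card Hinv Hbl BbD); last by move=> c y cS yB; apply: comp_closed.
  rewrite eM hat_card -mulnDr -[3 in LHS]muln1 -mulnDr (blk_minus vU wU).
  congr (_ * _).
  have -> : [set y in U | black y] = [set y in Ba | black y] :|: [set y in Bb | black y].
    by apply/setP => y; rewrite !inE andb_orl.
  rewrite -cardsUI; have -> : [set y in Ba | black y] :&: [set y in Bb | black y] = set0.
    apply/setP => y; rewrite !inE; apply/negP => /andP [/andP [yA _] /andP [yB _]].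
    have : y \in Ba :&: Bb by rewrite !inE yA yB.
       by rewrite disj inE.
  by rewrite cards0 addn0.
have Ucl P y z : P \subset S -> y \in U -> connect (adj p P) y z -> z \in U.
  move=> PS /setUP [h|h] cyz; apply/setUP; [left|right]; exact: comp_sub PS h cyz.
have Hf : (#|faces p' S M| + 3 = #|faces p S Ba| + #|faces p S Bb|)%N.
  rewrite !faces_card -big_split /=.
  have h3 : 3%N = \sum_(P in pairsets S) 1 by rewrite sum1_card pairsets_card // hat_card.
  rewrite [X in _ + X = _]h3 -big_split /=.
  apply: eq_bigr => P PS0; have : P \in pairsets S by [].
  rewrite inE => /andP [PS /eqP hP].
  rewrite (FBcount (P := P) (b := U)) //; last 3 first.
  - by apply: contra iS; apply: (subsetP PS).
  - by rewrite -card_gt0 hP.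
  - by move=> y z; apply: Ucl.
  rewrite imsetU -cardsUI.
  have -> : [set component p P x | x in Ba] :&: [set component p P x | x in Bb] = set0.
    apply/setP => X; rewrite [RHS]inE; apply/negP; rewrite inE => /andP [].
    move=> /imsetP [x xA ->] /imsetP [y yB e].
    have : x \in component p P y by rewrite -e inE connect0.
    rewrite inE => cyx.
    have xB : x \in Bb by apply: (comp_sub PS yB cyx).
    have : x \in Ba :&: Bb by rewrite inE xA xB.
    by rewrite disj inE.
  by rewrite cards0 addn0.
have Hg : (genus p' S M = genus p S Ba + genus p S Bb)%R.
  by rewrite /genus; apply: gsum_nat.
split => //.
- by exists (p c0 v).
- by split => // h; rewrite Hg h GRing.add0r.
move=> x xD xA xB.
have xv : x != v by apply: contraNneq xA => ->.
have xw : x != w by apply: contraNneq xB => ->.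
have xD' : x \in D' by rewrite inD' xv xw xD.
have nC : ~~ Cvw S x by rewrite /Cvw; move: xA xB; rewrite !inE => /negbTE -> /negbTE ->.
split => //; first by rewrite (GL2a iS c0S xD' nC).
move=> c y cS hy.
have ci : c != i by apply: contraNneq iS => <-.
have h := comp_closed hy cS.
have h1 := notin_comp xD xA h; have h2 := notin_comp xD xB h.
rewrite p'E //; [apply: contraNneq h1 => ->|apply: contraNneq h2 => ->] => //.
Qed.

End Contr.

Unset Implicit Arguments.
Import GRing.Theory Num.Theory.
Local Open Scope ring_scope.

Theorem mainTheorem3 (V : finType) (D : {set V}) (p : 'I_4 -> V -> V)
    (i : 'I_4) (v w : V)
    (HG : colored_graph D p) (Hv : v \in D) (HL : p i v = w)
    (Hab : component p (hat i) v != component p (hat i) w) :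
  let D' := contr_set D v w in
  let p' := contr_map p i v w in
  (* (i) *)
  (forall k : 'I_4, k != i ->
     let B := component p (hat k) v in
     let B' := B :\ v :\ w in
     [/\ w \in B /\ (exists2 x, x \in D' & component p' (hat k) x = B'),
         (#|B'| + 2 = #|B|)%N,
         (#|lines p' (hat k) B'| + 3 = #|lines p (hat k) B|)%N,
         (#|faces p' (hat k) B'| + 1 = #|faces p (hat k) B|)%N /\
         genus p' (hat k) B' = genus p (hat k) B
       & forall x, x \in D -> x \notin B ->
           [/\ x \in D', component p' (hat k) x = component p (hat k) x
             & forall c y, c \in hat k -> y \in component p (hat k) x -> p' c y = p c y]])
  /\
  (* (ii) *)
  (let Ba := component p (hat i) v in
   let Bb := component p (hat i) w in
   let M := (Ba :|: Bb) :\ v :\ w in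
   [/\ (exists2 x, x \in D' & component p' (hat i) x = M),
       (#|M| + 2 = #|Ba| + #|Bb|)%N /\
       (#|lines p' (hat i) M| + 3 = #|lines p (hat i) Ba| + #|lines p (hat i) Bb|)%N,
       (#|faces p' (hat i) M| + 3 = #|faces p (hat i) Ba| + #|faces p (hat i) Bb|)%N,
       genus p' (hat i) M = genus p (hat i) Ba + genus p (hat i) Bb /\
       (genus p (hat i) Ba = 0 -> genus p' (hat i) M = genus p (hat i) Bb)
     & forall x, x \in D -> x \notin Ba -> x \notin Bb ->
         [/\ x \in D', component p' (hat i) x = component p (hat i) x
           & forall c y, c \in hat i -> y \in component p (hat i) x -> p' c y = p c y]]).
Proof.
move=> D' p'.
case: HG => HD Hinv [black Hbl] _ _.
have Hnw : ~~ connect (adj p (hat i)) v w.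
  apply/negP => h; move/negP: Hab; apply; apply/eqP.
  by symmetry; apply: (comp_eq HD Hinv Hv); rewrite inE.
split.
  by move=> k ki; apply: (PartI HD Hinv Hbl Hv HL Hnw ki).
exact: (PartII HD Hinv Hbl Hv HL Hnw).
Qed.
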